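(* Let $(\Omega,\mathcal F,P)$ be a probability space and let $(X_x)_{x\in\mathbb{R}}$ be a jointly measurable family of non-negative random variables which are identically distributed and non-trivial (i.e. $P(X_x>0)>0$). Let $f:\mathbb{R}\to[0,\infty)$ be measurable. If $P\big(\int_{\mathbb{R}} f(x)X_x\,dx<\infty\big)=1$, then $\int_{\mathbb{R}} f(x)\,dx<\infty$. *)

(* Defs.v *)
From HB Require Import structures.
From mathcomp Require Import all_boot all_order all_algebra.
From mathcomp Require Import all_classical all_reals all_analysis.
Set Implicit Arguments. Unset Strict Implicit. Unset Printing Implicit Defensive.
Import Order.TTheory GRing.Theory Num.Theory.
Local Open Scope classical_set_scope.
Local Open Scope ring_scope.

Definition identically_distributed (d : measure_display) (T : measurableType d)
  (R : realType) (P : probability T R) (I : Type) (X : I -> T -> R) : Prop :=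
  forall (x y : I) (B : set R), measurable B ->
    P (X x @^-1` B) = P (X y @^-1` B).

(* Main.v *)
Require Import Defs.
From HB Require Import structures.
From mathcomp Require Import all_boot all_order all_algebra.
From mathcomp Require Import all_classical all_reals all_analysis.
From mathcomp Require Import lra measurable_realfun.
Import Order.TTheory GRing.Theory Num.Theory.
Local Open Scope classical_set_scope.
Local Open Scope ring_scope.

Theorem lemma1 (R : realType) (d : measure_display) (T : measurableType d)
  (P : probability T R) (X : R -> T -> R) (f : R -> R)
  (hXmeas : measurable_fun setT (fun p : R * T => X p.1 p.2))
  (hXnn : forall x w, 0 <= X x w)
  (hXid : identically_distributed P X)
  (hXnt : forall x, (0 < P [set w | (0 < X x w)%R])%E)
  (hfmeas : measurable_fun setT f)
  (hfnn : forall x, 0 <= f x)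
  (hfin : P [set w | (\int[lebesgue_measure]_x (f x * X x w)%:E < +oo)%E] = 1%E) :
  (\int[lebesgue_measure]_x (f x)%:E < +oo)%E.
Proof.
have mXx x : measurable_fun setT (X x).
  exact: (measurableT_comp hXmeas (pair1_measurable x)).
have mXw w : measurable_fun setT (X ^~ w).
  exact: (measurableT_comp hXmeas (pair2_measurable w)).
have PE S : measurable S -> P S = (fine (P S))%:E.
  by move=> mS; rewrite fineK // fin_num_measure.
have P01 S : measurable S -> 0 <= fine (P S) <= 1.
  move=> mS; rewrite -!lee_fin -PE // measure_ge0 /=.
  by rewrite -(probability_setT P) le_measure ?inE.
have [delta [d0 [pr [pr0 hpr]]]] : exists delta : R, 0 < delta /\
    exists pr : R, 0 < pr /\
    forall x, P (X x @^-1` `]delta, +oo[) = pr%:E.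
  pose E n := X 0 @^-1` `](n.+1%:R)^-1, +oo[.
  have mE n : measurable (E n).
    by rewrite -[E n]setTI; apply: mXx => //; exact: measurable_itv.
  have ndE : nondecreasing_seq E.
    move=> m n mn; apply/subsetPset => w; rewrite /E /preimage /= !in_itv /= !andbT; apply: le_lt_trans.
    by rewrite lef_pV2 ?posrE // ler_nat ltnS.
  have UE : \bigcup_n E n = [set w | 0 < X 0 w].
    apply/seteqP; split=> w /=.
      move=> [n _]; rewrite /E /preimage /= in_itv /= andbT; apply: lt_trans.
      by rewrite invr_gt0.
    move=> Xw; exists (Num.Def.truncn (X 0 w)^-1) => //.
    rewrite /E /preimage /= in_itv /= andbT -[X in _ < X]invrK ltf_pV2 ?posrE ?invr_gt0 //.
    exact: truncnS_gt.
  have mU : measurable (\bigcup_n E n) by exact: bigcupT_measurable.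
  have c1 := nondecreasing_cvg_mu (mu:=P) mE mU ndE.
  have c2 : (P \o E) @ \oo --> ereal_sup (range (P \o E)).
    apply: ereal_nondecreasing_cvgn => m n mn /=.
    by apply: le_measure; rewrite ?inE //; exact/subsetPset/ndE.
  have eq : P (\bigcup_n E n) = ereal_sup (range (P \o E)).
    exact: (cvg_unique (@ereal_hausdorff R) c1 c2).
  have := hXnt 0; rewrite -UE eq => /ereal_sup_gt [y [n _ <-]] Pn.
  exists (n.+1%:R)^-1; split; first by rewrite invr_gt0.
  exists (fine (P (E n))); split.
    by apply: fine_gt0; rewrite Pn /= (PE _ (mE n)) ltry.
  move=> x; rewrite -(PE _ (mE n)) /E (hXid x 0) //; exact: measurable_itv.
pose Y w := (\int[lebesgue_measure]_x (f x * X x w)%:E)%E.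
have mF : measurable_fun setT (fun z : R * T => (f z.1 * X z.1 z.2)%:E).
  apply/measurable_EFinP; apply: measurable_funM => //.
  exact: measurableT_comp hfmeas measurable_fst.
have F0 : forall z : R * T, (0 <= (f z.1 * X z.1 z.2)%:E)%E.
  by move=> z; rewrite lee_fin mulr_ge0.
have mY : measurable_fun setT Y.
  exact: (measurable_fun_fubini_tonelli_G (m1:=lebesgue_measure) _ mF F0).
have hfin' : P [set w | (Y w < +oo)%E] = 1%E := hfin.
have [M hM] : exists M : nat,
    (P (~` [set w | (Y w <= M%:R%:E)%E]) <= (pr / 2)%:E)%E.
  pose A n := [set w | (Y w <= n%:R%:E)%E].
  have mA n : measurable (A n).
    rewrite -[A n]setTI; exact: measurable_lee mY (measurable_cst _).
  have ndA : nondecreasing_seq A.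
    move=> m n mn; apply/subsetPset => w; rewrite /A /= => h; apply: le_trans h _.
    by rewrite lee_fin ler_nat.
  have UA : \bigcup_n A n = [set w | (Y w < +oo)%E].
    apply/seteqP; split=> w /=.
      by move=> [n _]; rewrite /A /=; move/le_lt_trans; apply; rewrite ltry.
    case E: (Y w) => [r| |] // _.
      exists (Num.Def.truncn r).+1 => //; rewrite /A /= E lee_fin ltW //.
      exact: truncnS_gt.
    by exists 0%N => //; rewrite /A /= E leNye.
  have mU : measurable (\bigcup_n A n) by exact: bigcupT_measurable.
  have c1 := nondecreasing_cvg_mu (mu:=P) mA mU ndA.
  have c2 : (P \o A) @ \oo --> ereal_sup (range (P \o A)).
    apply: ereal_nondecreasing_cvgn => m n mn /=.
    by apply: le_measure; rewrite ?inE //; exact/subsetPset/ndA.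
  have eq : P (\bigcup_n A n) = ereal_sup (range (P \o A)).
    exact: (cvg_unique (@ereal_hausdorff R) c1 c2).
  have : ((1 - pr/2)%:E < ereal_sup (range (P \o A)))%E.
    by rewrite -eq UA hfin' lte_fin; lra.
  move=> /ereal_sup_gt [y [n _ <-]] Pn; exists n.
  rewrite (probability_setC P (mA n)) (PE _ (mA n)).
  rewrite /= (PE _ (mA n)) lte_fin in Pn.
  rewrite -EFinB lee_fin; lra.
pose A := [set w | (Y w <= M%:R%:E)%E].
have mA : measurable A.
  by rewrite -[A]setTI; exact: measurable_lee mY (measurable_cst _).
pose B x := X x @^-1` `]delta, +oo[.
have mB x : measurable (B x).
  by rewrite -[B x]setTI; apply: mXx => //; exact: measurable_itv.
have hS x : ((pr/2)%:E <= P (A `&` B x))%E.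
  have h1 : P (B x) = (P (B x `\` A) + P (B x `&` A))%E := @measureDI _ _ _ P (B x) A (mB x) mA.
  have mD1 : measurable (B x `\` A) by apply: measurableD.
  have mI1 : measurable (A `&` B x) by apply: measurableI.
  have mC1 : measurable (~` A) by apply: measurableC.
  move: h1; rewrite (_ : P (B x) = pr%:E); last exact: hpr.
  rewrite setIC.
  rewrite (PE _ mD1) (PE _ mI1) -EFinD.
  move=> [h3].
  have : (P (B x `\` A) <= P (~` A))%E.
    by apply: le_measure; rewrite ?inE //; move=> w [].
  rewrite (PE _ mD1) (PE _ mC1).
  move: hM; rewrite -/A (PE _ mC1) (PE _ mI1) !lee_fin.
  lra.
pose S := (snd @^-1` A) `&` ((fun p : R * T => X p.1 p.2) @^-1` `]delta, +oo[).
have mS : measurable S.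
  apply: measurableI.
    by rewrite -[X in measurable X]setTI; exact: measurable_snd.
  by rewrite -[X in measurable X]setTI; apply: hXmeas => //; exact: measurable_itv.
pose g z := (f z.1 * \1_S z)%:E.
have mg : measurable_fun setT g.
  apply/measurable_EFinP; apply: measurable_funM.
    exact: measurableT_comp hfmeas measurable_fst.
  exact: measurable_indic.
have g0 z : (0 <= g z)%E by rewrite lee_fin mulr_ge0 // indicE.
have hfub := fubini_tonelli (m1:=lebesgue_measure) (m2:=P) g mg g0.
have low : ((pr/2)%:E * \int[lebesgue_measure]_x (f x)%:E <=
    \int[lebesgue_measure]_x \int[P]_w g (x, w))%E.
  rewrite -ge0_integralZl //; last 3 first.
  - exact/measurable_EFinP.
  - by move=> x _; rewrite lee_fin.
  - by rewrite lee_fin divr_ge0 // ltW.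
  apply: ge0_le_integral => //.
  - by move=> x _; rewrite -EFinM lee_fin mulr_ge0 // divr_ge0 // ltW.
  - by apply: measurable_funeM; exact/measurable_EFinP.
  - exact: (measurable_fun_fubini_tonelli_F (m2:=P) g mg g0).
  move=> x _.
  have gx w : g (x, w) = ((f x)%:E * (\1_(A `&` B x) w)%:E)%E.
    by rewrite /g EFinM.
  under eq_integral => w _ do rewrite gx.
  rewrite ge0_integralZl //; last 2 first.
  - by apply/measurable_EFinP; apply: measurable_indic; exact: measurableI.
  - by rewrite lee_fin.
  rewrite integral_indic ?setIT //; last exact: measurableI.
  by rewrite muleC; apply: lee_wpmul2l; [rewrite lee_fin | exact: hS].
have up : (\int[P]_w \int[lebesgue_measure]_x g (x, w) <= (M%:R / delta)%:E)%E.
  apply: (@le_trans _ _ (\int[P]_w (M%:R / delta)%:E)%E).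
    apply: ge0_le_integral => //.
    - by move=> w _; apply: integral_ge0 => x _; exact: g0.
    - exact: (measurable_fun_fubini_tonelli_G (m1:=lebesgue_measure) g mg g0).
    move=> w _.
    have [Aw|nAw] := pselect (A w); last first.
      rewrite integral0_eq; first by rewrite lee_fin divr_ge0 // ltW.
      by move=> x _; rewrite /g indicE memNset ?mulr0 // => -[].
    apply: (@le_trans _ _ (\int[lebesgue_measure]_x ((delta^-1)%:E * (f x * X x w)%:E))%E).
      apply: ge0_le_integral => //.
      - exact: (measurableT_comp mg (pair2_measurable w)).
      - apply: (measurable_funeM (f:=fun x => (f x * X x w)%:E)).
        by apply/measurable_EFinP; exact: measurable_funM.
      move=> x _; rewrite /g -EFinM lee_fin indicE.
      case: (boolP ((x, w) \in S)) => [/set_mem [_ hB]|_]; last first.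
        by rewrite /= mulr0; apply: mulr_ge0; [rewrite invr_ge0 ltW | apply: mulr_ge0].
      rewrite /= in_itv /= andbT in hB.
      rewrite /= mulr1 mulrA [delta^-1 * _]mulrC -mulrA ler_peMr //.
      by rewrite mulrC ler_pdivlMr // mul1r ltW.
    rewrite ge0_integralZl //; last 3 first.
    - exact: measurableT_comp mF (pair2_measurable w).
    - by move=> x _; exact: F0 (x, w).
    - by rewrite lee_fin invr_ge0 ltW.
    by rewrite mulrC EFinM lee_wpmul2l // lee_fin invr_ge0 ltW.
  first [ by rewrite (integral_cst P) // probability_setT mule1 | by rewrite integral_cst //= (probability_setT P) mule1 | by rewrite integral_cst // (_ : P setT = 1%E) ?mule1 // probability_setT ].
have key : ((pr/2)%:E * \int[lebesgue_measure]_x (f x)%:E <= (M%:R / delta)%:E)%E.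
  by apply: le_trans low _; rewrite hfub.
rewrite ltey; apply/negP => /eqP hinf.
move: key; rewrite hinf gt0_muley ?lte_fin ?divr_gt0 // leye_eq.
Qed.
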